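(* Let $(\Omega,\mathcal{F})$ be a measurable space and $\mathcal{P}=\{P_1,\dots,P_K\}$ a finite set of probability measures on it, with $\hat{\mathbb{E}}[Z]=\max_{1\le i\le K}E_{P_i}[Z]$. Let $X,Y$ be random variables with $\hat{\mathbb{E}}[X^2]+\hat{\mathbb{E}}[Y^2]<\infty$, and set $a_i=E_{P_i}[X]$, $b_i=E_{P_i}[Y]$, $c_i=C_{P_i}(X,Y)$ for $1\le i\le K$. For $1\le i\le j\le K$ define $$q_{ij}(x)=\begin{cases}\dfrac{1}{b_j-b_i}\Big((x-b_i)(x-b_j)(a_i-a_j)+(x-b_i)(c_j-c_i)\Big)+c_i, & a_i\ne a_j\text{ and }b_i\ne b_j,\\ c_i, & \text{otherwise},\end{cases}$$ and $$\tilde{\mu}_{ij}=\begin{cases}\left(\left(\dfrac{c_j-c_i}{2(a_j-a_i)}+\dfrac{b_i+b_j}{2}\right)\vee\underline{b}_{ij}\right)\wedge\overline{b}_{ij}, & a_i\ne a_j\text{ and }b_i\ne b_j,\\ b_i, & \text{otherwise},\end{cases}$$ where $\underline{b}_{ij}=b_i\wedge b_j$ and $\overline{b}_{ij}=b_i\vee b_j$. Then $$\overline{C}(X,Y)=\max\Big\{\max_{1\le i\le K}C_{P_i}(X,Y),\ \max_{1\le i\le j\le K}q_{ij}(\tilde{\mu}_{ij})\Big\}.$$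
   Context: For a random variable $W$ with $\hat{\mathbb{E}}[W^2]<\infty$: $\overline{\mu}_W=\hat{\mathbb{E}}[W]$, $\underline{\mu}_W=-\hat{\mathbb{E}}[-W]$, $M_W=[\underline{\mu}_W,\overline{\mu}_W]$. Upper covariance $\overline{C}(X,Y)=\max_{\mu_2\in M_Y}\min_{\mu_1\in M_X}\hat{\mathbb{E}}[(X-\mu_1)(Y-\mu_2)]$. For a probability measure $P$, $C_P(X,Y)=E_P[(X-E_P[X])(Y-E_P[Y])]$. $\vee$ and $\wedge$ denote max and min. *)

(* Defs.v *)
From HB Require Import structures.
From mathcomp Require Import all_boot all_order all_algebra.
From mathcomp Require Import all_classical all_reals all_analysis.
Set Implicit Arguments. Unset Strict Implicit. Unset Printing Implicit Defensive.
Import Order.TTheory GRing.Theory Num.Theory.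
Local Open Scope ring_scope.
Local Open Scope classical_set_scope.

Section defs.
Context {d : measure_display} {T : measurableType d} {R : realType} {K : nat}.
Variable P : 'I_K -> probability T R.

Definition Ehat (Z : T -> R) : \bar R :=
  (\big[Order.max/-oo]_(i < K) 'E_(P i)[Z])%E.

Definition Mset (W : T -> R) : set R :=
  [set r : R | (- Ehat (fun w => (- W w)%R) <= r%:E <= Ehat W)%E].

(* upper covariance  max_{mu2 in M_Y} min_{mu1 in M_X} \hat E[(X-mu1)(Y-mu2)],
   max/min rendered as sup/inf *)
Definition upper_cov (X Y : T -> R) : \bar R :=
  ereal_sup [set ereal_inf [set Ehat (fun w => (X w - m1) * (Y w - m2))
                             | m1 in Mset X] | m2 in Mset Y].

Section coeffs.
Variables X Y : T -> R.
Definition ca (i : 'I_K) : R := fine ('E_(P i)[X])%E.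
Definition cb (i : 'I_K) : R := fine ('E_(P i)[Y])%E.
Definition cc (i : 'I_K) : R := fine (covariance (P i) X Y).

Definition qfun (i j : 'I_K) (x : R) : R :=
  if (ca i != ca j) && (cb i != cb j) then
    ((x - cb i) * (x - cb j) * (ca i - ca j) + (x - cb i) * (cc j - cc i))
      / (cb j - cb i) + cc i
  else cc i.

Definition mutilde (i j : 'I_K) : R :=
  if (ca i != ca j) && (cb i != cb j) then
    Order.min (Order.max ((cc j - cc i) / (2 * (ca j - ca i)) + (cb i + cb j) / 2)
                         (Order.min (cb i) (cb j)))
              (Order.max (cb i) (cb j))
  else cb i.
End coeffs.
End defs.

(* Main.v *)
Require Import Defs.
From HB Require Import structures.
From mathcomp Require Import all_boot all_order all_algebra.
From mathcomp Require Import all_classical all_reals all_analysis.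
From mathcomp Require Import ring lra.
Import Order.TTheory GRing.Theory Num.Theory.
Local Open Scope ring_scope.

Section meas.
Context d (T : measurableType d) (R : realType).
Local Open Scope ereal_scope.

Lemma L2_of_sq (Q : probability T R) (Z : T -> R) : measurable_fun setT Z ->
  'E_Q[fun w => (Z w ^+ 2)%R] < +oo -> Z \in Lfun Q 2%:E.
Proof.
move=> mZ H; rewrite inE; apply/andP; split; first by rewrite inE.
rewrite inE /= /finite_norm unlock /Lnorm; apply: poweR_lty.
move: H; rewrite unlock.
under eq_integral => w _.
  rewrite /= powR_mulrn ?normr_ge0// real_normK ?num_real//.
  over.
done.
Qed.

Section lin.
Variables (Q : probability T R) (X Y : T -> R).
Hypotheses (X2 : X \in Lfun Q 2%:E) (Y2 : Y \in Lfun Q 2%:E).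

Let Pfin : Q setT \is a fin_num := fin_num_measure Q _ measurableT.
Let X1 := Lfun_subset12 Pfin X2.
Let Y1 := Lfun_subset12 Pfin Y2.
Let XY1 := Lfun2_mul_Lfun1 X2 Y2.

Lemma EfinX : 'E_Q[X] = (fine 'E_Q[X])%:E.
Proof. by rewrite fineK// expectation_fin_num. Qed.

Lemma Eneg : 'E_Q[fun w => (- X w)%R] = (- fine 'E_Q[X])%:E.
Proof.
have -> : (fun w => (- X w)%R) = ((-1) \o* X)%R.
  by apply/funext => w; rewrite /GRing.mulr_fun mulrN1.
by rewrite expectationZl// {1}EfinX -EFinM mulN1r.
Qed.

Lemma Emix m1 m2 : 'E_Q[fun w => ((X w - m1) * (Y w - m2))%R] =
  (fine (covariance Q X Y) + (fine 'E_Q[X] - m1) * (fine 'E_Q[Y] - m2))%:E.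
Proof.
have -> : (fun w => ((X w - m1) * (Y w - m2))%R) =
   ((X * Y) \- (m2 \o* X) \- (m1 \o* Y) \+ cst (m1 * m2))%R.
  by apply/funext => w; rewrite /= /GRing.mulr_fun /=; have -> : (X * Y)%R w = (X w * Y w)%R by []; ring.
have LX2 : (m2 \o* X)%R \in Lfun Q 1 by rewrite Lfun_scale.
have LY1 : (m1 \o* Y)%R \in Lfun Q 1 by rewrite Lfun_scale.
rewrite expectationD ?rpredB ?Lfun_cst//.
rewrite !expectationB ?rpredB//.
rewrite !expectationZl//.
rewrite (_ : 'E_Q[(fun=> m1)] = m1%:E); last exact: expectation_cst.
have hc := covarianceE X1 Y1 XY1.
have fXY : 'E_Q[X * Y] \is a fin_num by rewrite expectation_fin_num.
have fX : 'E_Q[X] \is a fin_num by rewrite expectation_fin_num.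
have fY : 'E_Q[Y] \is a fin_num by rewrite expectation_fin_num.
rewrite hc -(fineK fXY) -(fineK fX) -(fineK fY).
rewrite -!EFinM -!EFinB -EFinD /=; congr EFin; ring.
exact: Lfun_cst.
Qed.
End lin.
End meas.

Section alg.
Variable R : realFieldType.
Implicit Types ai aj bi bj ci cj x y : R.

Definition Qe ai aj bi bj ci cj y :=
  ((y - bi) * (y - bj) * (ai - aj) + (y - bi) * (cj - ci)) / (bj - bi) + ci.
Definition vtx ai aj bi bj ci cj := (cj - ci) / (2 * (aj - ai)) + (bi + bj) / 2.
Definition clampmu ai aj bi bj ci cj :=
  Order.min (Order.max (vtx ai aj bi bj ci cj) (Order.min bi bj)) (Order.max bi bj).

Lemma between_lohi bi bj x : (x - bi) * (x - bj) <= 0 ->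
  Order.min bi bj <= x <= Order.max bi bj.
Proof.
move=> h; case: (leP bi bj) => hb.
  apply/andP; split; nra.
apply/andP; split; nra.
Qed.

Lemma clamp_between ai aj bi bj ci cj :
  let mu := clampmu ai aj bi bj ci cj in (mu - bi) * (mu - bj) <= 0.
Proof.
rewrite /clampmu; set v := vtx _ _ _ _ _ _.
case: (leP bi bj) => hb.
  rewrite ?(min_l hb) ?(max_r hb).
  case: (leP v bi) => hv; first by rewrite ?(max_r hv) ?(min_l hb); nra.
  rewrite ?(max_l (ltW hv)).
  case: (leP v bj) => hv2; first by rewrite ?(min_l hv2); nra.
  by rewrite ?(min_r (ltW hv2)); nra.
rewrite ?(min_r (ltW hb)) ?(max_l (ltW hb)).
case: (leP v bj) => hv; first by rewrite ?(max_r hv) ?(min_l (ltW hb)); nra.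
rewrite ?(max_l (ltW hv)).
case: (leP v bi) => hv2; first by rewrite ?(min_l hv2); nra.
by rewrite ?(min_r (ltW hv2)); nra.
Qed.

Lemma interp_le ci cj t : 0 <= t <= 1 -> ci + t * (cj - ci) <= Order.max ci cj.
Proof.
move=> /andP[t0 t1]; case: (leP ci cj) => hc.
  nra.
nra.
Qed.

Lemma Qbound_scal ai aj bi bj ci cj x : bi != bj -> (x - bi) * (x - bj) <= 0 ->
  Qe ai aj bi bj ci cj x <= Order.max (Order.max ci cj)
     (if (ai != aj) && (bi != bj) then Qe ai aj bi bj ci cj (clampmu ai aj bi bj ci cj)
      else ci).
Proof.
move=> hb hx.
have D : bj - bi != 0 by rewrite subr_eq0 eq_sym.
set A := (ai - aj) / (bj - bi).
have QeE : forall y, Qe ai aj bi bj ci cj y =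
   A * ((y - bi) * (y - bj)) + (ci + ((y - bi) / (bj - bi)) * (cj - ci)).
  by move=> y; rewrite /Qe /A; field.
have t01 : 0 <= (x - bi) / (bj - bi) <= 1.
  case: (ltgtP bi bj) => hb'; last by rewrite hb' eqxx in hb.
  - have h1 : 0 < bj - bi by rewrite subr_gt0.
    apply/andP; split; first by apply: divr_ge0; nra.
    by rewrite ler_pdivrMr // mul1r; nra.
  - have h1 : bj - bi < 0 by rewrite subr_lt0.
    rewrite -[_ / _]mulrNN -invrN.
    have h2 : 0 < - (bj - bi) by rewrite oppr_gt0.
    apply/andP; split; first by apply: divr_ge0; nra.
    by rewrite ler_pdivrMr // mul1r; nra.
have Hint := @interp_le ci cj _ t01.
case: (leP 0 A) => hA.
  rewrite le_max; apply/orP; left; apply: le_trans Hint; rewrite QeE; nra.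
have hai : ai != aj.
  apply/negP => /eqP e; move: hA; rewrite /A e subrr mul0r ltxx //.
rewrite hai hb /=.
have D2 : aj - ai != 0 by rewrite subr_eq0 eq_sym.
set mu := clampmu _ _ _ _ _ _.
set v := vtx ai aj bi bj ci cj.
have Eq : Qe ai aj bi bj ci cj x - Qe ai aj bi bj ci cj mu =
   A * ((x - mu) * (x + mu - 2 * v)).
  rewrite /Qe /A /v /vtx; field.
  by rewrite D2 D.
have /andP[lx xh] := @between_lohi _ _ _ hx.
have sgn : 0 <= (x - mu) * (x + mu - 2 * v).
  rewrite /mu /clampmu -/v.
  set lo := Order.min bi bj in lx *; set hi := Order.max bi bj in xh *.
  have lh : lo <= hi by apply: le_trans xh.
  case: (leP v lo) => hv; first by rewrite ?(max_r hv) ?(min_l lh); nra.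
  rewrite ?(max_l (ltW hv)).
  case: (leP v hi) => hv2; first by rewrite ?(min_l hv2) (_ : x + v - 2 * v = x - v) ?sqr_ge0 -?expr2 ?sqr_ge0 //; ring.
  by rewrite ?(min_r (ltW hv2)); nra.
have : Qe ai aj bi bj ci cj x <= Qe ai aj bi bj ci cj mu.
  rewrite -subr_le0 Eq; nra.
by move=> h; rewrite le_max h orbT.
Qed.


Lemma Qe_sym ai aj bi bj ci cj x : bi != bj ->
  Qe ai aj bi bj ci cj x = Qe aj ai bj bi cj ci x.
Proof.
move=> h; have D : bj - bi != 0 by rewrite subr_eq0 eq_sym.
have D' : bi - bj != 0 by rewrite subr_eq0.
rewrite /Qe; field; by rewrite D D'.
Qed.

Lemma lower_scal ai aj bi bj ci cj mu m : bi != bj -> (mu - bi) * (mu - bj) <= 0 ->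
  Qe ai aj bi bj ci cj mu <= ci + (ai - m) * (bi - mu) \/
  Qe ai aj bi bj ci cj mu <= cj + (aj - m) * (bj - mu).
Proof.
move=> hb hm.
have D : bj - bi != 0 by rewrite subr_eq0 eq_sym.
set Q := Qe _ _ _ _ _ _ _.
set Li := ci + _; set Lj := cj + _.
have id : (bj - mu) * Li + (mu - bi) * Lj = (bj - bi) * Q.
  rewrite /Li /Lj /Q /Qe; field; exact D.
case: (leP Q Li) => h1; first by left.
case: (leP Q Lj) => h2; first by right.
exfalso.
case: (ltgtP bi bj) => hb'; last by rewrite hb' eqxx in hb.
- have m1 : bi <= mu by nra.
  have m2 : mu <= bj by nra.
  case: (ltgtP mu bj) => hm2.
  + nra.
  + nra.
  + subst mu; nra.
- have m1 : mu <= bi by nra.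
  have m2 : bj <= mu by nra.
  case: (ltgtP mu bj) => hm2.
  + nra.
  + nra.
  + subst mu; nra.
Qed.

End alg.
Arguments Qe {R}. Arguments vtx {R}. Arguments clampmu {R}.
Arguments between_lohi {R}. Arguments clamp_between {R}. Arguments interp_le {R}.
Arguments Qbound_scal {R}. Arguments Qe_sym {R}. Arguments lower_scal {R}.

Section core.
Variables (R : realFieldType) (K : nat) (a b c : 'I_K -> R).

Definition gq (i j : 'I_K) (x : R) : R :=
  if (a i != a j) && (b i != b j) then Qe (a i) (a j) (b i) (b j) (c i) (c j) x
  else c i.
Definition gmu (i j : 'I_K) : R :=
  if (a i != a j) && (b i != b j) then clampmu (a i) (a j) (b i) (b j) (c i) (c j)
  else b i.

Lemma gmu_between i j : (gmu i j - b i) * (gmu i j - b j) <= 0.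
Proof.
rewrite /gmu; case: ifP => _; first exact: clamp_between.
by rewrite subrr mul0r.
Qed.

Lemma lower_q i j m : exists k, ((k == i) || (k == j)) &&
  (gq i j (gmu i j) <= c k + (a k - m) * (b k - gmu i j)).
Proof.
rewrite /gq /gmu; case: ifP => h.
  have hb : b i != b j by case/andP: h.
  case: (lower_scal (a i) (a j) (b i) (b j) (c i) (c j) (clampmu (a i) (a j) (b i) (b j) (c i) (c j)) m hb (clamp_between _ _ _ _ _ _)) => H.
  - by exists i; rewrite h eqxx H.
  - by exists j; rewrite h eqxx orbT H.
by exists i; rewrite eqxx subrr mulr0 addr0 lexx.
Qed.

Lemma core_upper (V x lo hi : R) :
  (forall i, c i <= V) ->
  (forall i j : 'I_K, (i <= j)%N -> gq i j (gmu i j) <= V) ->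
  (forall i, lo <= a i <= hi) -> lo <= hi ->
  exists m1, lo <= m1 <= hi /\ forall i, c i + (a i - m1) * (b i - x) <= V.
Proof.
move=> Hc Hq Ha lh.
have HQ0 : forall i j : 'I_K, (i <= j)%N -> b i != b j -> (x - b i) * (x - b j) <= 0 ->
    Qe (a i) (a j) (b i) (b j) (c i) (c j) x <= V.
  move=> i j ij hb hx.
  apply: le_trans (Qbound_scal (a i) (a j) (b i) (b j) (c i) (c j) x hb hx) _.
  rewrite ge_max ge_max !Hc //=.
  have := Hq i j ij; rewrite /gq /gmu.
  case: ifP => h; [by rewrite h | by move=> _; exact: Hc].
have HQ : forall i j, b i != b j -> (x - b i) * (x - b j) <= 0 ->
    Qe (a i) (a j) (b i) (b j) (c i) (c j) x <= V.
  move=> i j hb hx; case: (leqP i j) => h; first exact: HQ0.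
  rewrite Qe_sym //; apply: HQ0; first exact: ltnW.
    by rewrite eq_sym.
  by rewrite mulrC.
have Hpair : forall k j, x < b k -> b j < x ->
   (b k - x) * c j - (b j - x) * c k + (b k - x) * (b j - x) * (a j - a k)
     <= V * ((b k - x) - (b j - x)).
  move=> k j hk hj.
  have hb : b k != b j by apply/eqP => e; move: hk; rewrite e => hk; lra.
  have hx : (x - b k) * (x - b j) <= 0 by nra.
  have := HQ k j hb hx.
  have D : b j - b k != 0 by rewrite subr_eq0 eq_sym.
  have pos : 0 < (b k - x) - (b j - x) by lra.
  move=> h.
  have e : (b k - x) * c j - (b j - x) * c k + (b k - x) * (b j - x) * (a j - a k)
     = Qe (a k) (a j) (b k) (b j) (c k) (c j) x * ((b k - x) - (b j - x)).
    rewrite /Qe; field; exact: D.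
  rewrite e; nra.
pose r i := (c i + a i * (b i - x) - V) / (b i - x).
pose m1 := \big[Order.max/lo]_(i | x < b i) r i.
exists m1; split.
  apply/andP; split; first exact: bigmax_ge_id.
  apply: bigmax_le => // i hi'.
  have d0 : 0 < b i - x by rewrite subr_gt0.
  rewrite /r ler_pdivrMr //.
  have := Hc i; have := Ha i; case/andP => _ ahi. nra.
move=> i; case: (ltgtP x (b i)) => hi'.
- have d0 : 0 < b i - x by rewrite subr_gt0.
  have : r i <= m1 by rewrite /m1; exact: le_bigmax_cond.
  rewrite /r ler_pdivrMr // => h; nra.
- have d0 : b i - x < 0 by rewrite subr_lt0.
  have : m1 <= (c i + a i * (b i - x) - V) / (b i - x).
    apply: bigmax_le.
      rewrite ler_ndivlMr //.
      have := Hc i; have := Ha i; case/andP => loa _. nra.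
    move=> k hk.
    have dk : 0 < b k - x by rewrite subr_gt0.
    rewrite /r ler_pdivrMr // mulrAC ler_ndivlMr //.
    have := Hpair k i hk hi'; nra.
  rewrite ler_ndivlMr // => h; nra.
- by rewrite hi' subrr mulr0 addr0.
Qed.

End core.
Arguments gq {R K}. Arguments gmu {R K}. Arguments lower_q {R K}.
Arguments core_upper {R K}. Arguments gmu_between {R K}.

Lemma bigmaxE {R : realType} {K : nat} (f : 'I_K -> R) (k : 'I_K) :
  (forall i, f i <= f k) -> (\big[Order.max/-oo%E]_(i < K) (f i)%:E = (f k)%:E)%E.
Proof.
move=> H; apply/eqP; rewrite eq_le; apply/andP; split.
  by apply: bigmax_le => [|i _]; [exact: leNye | rewrite lee_fin].
exact: (le_bigmax (-oo%E) (fun i => (f i)%:E) k).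
Qed.

Lemma argmaxE {R : realType} {K : nat} (f : 'I_K -> R) : (0 < K)%N ->
  exists k, forall i, f i <= f k.
Proof.
move=> K0; pose i0 := Ordinal K0.
case: (@arg_maxP _ _ _ i0 xpredT f erefl) => k _ H.
by exists k => i; apply: H.
Qed.

Lemma argminE {R : realType} {K : nat} (f : 'I_K -> R) : (0 < K)%N ->
  exists k, forall i, f k <= f i.
Proof.
move=> K0; have [k Hk] := argmaxE (fun i => - f i) K0.
by exists k => i; rewrite -lerN2; apply: Hk.
Qed.

Theorem theorem4p4 (d : measure_display) (T : measurableType d) (R : realType)
  (K : nat) (P : 'I_K -> probability T R) (X Y : T -> R) :
  (0 < K)%N ->
  measurable_fun setT X -> measurable_fun setT Y ->
  (Ehat P (fun w => (X w ^+ 2)%R) + Ehat P (fun w => (Y w ^+ 2)%R) < +oo)%E ->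
  upper_cov P X Y =
  Order.max (\big[Order.max/-oo%E]_(i < K) (covariance (P i) X Y))
            (\big[Order.max/-oo%E]_(i < K) \big[Order.max/-oo%E]_(j < K | (i <= j)%N)
                ((qfun P X Y i j (mutilde P X Y i j))%:E)).
Proof.
move=> K0 mX mY Hsq.
pose i0 := Ordinal K0.
have Ehat_fin : forall (Z : T -> R), measurable_fun setT Z ->
   (Ehat P (fun w => (Z w ^+ 2)%R) < +oo)%E -> forall i, Z \in Lfun (P i) 2%:E.
  move=> Z mZ HZ i; apply: L2_of_sq => //.
  apply: le_lt_trans HZ.
  exact: (le_bigmax (-oo%E) (fun i => 'E_(P i)[fun w => (Z w ^+ 2)%R])%E i).
have Ege0 : forall (Z : T -> R), (0 <= Ehat P (fun w => (Z w ^+ 2)%R))%E.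
  move=> Z; apply: le_trans (le_bigmax (-oo%E) (fun i => 'E_(P i)[fun w => (Z w ^+ 2)%R])%E i0).
  by apply: expectation_ge0 => w; exact: sqr_ge0.
have X2 : forall i, X \in Lfun (P i) 2%:E.
  apply: Ehat_fin => //; apply: le_lt_trans Hsq; exact: leeDl.
have Y2 : forall i, Y \in Lfun (P i) 2%:E.
  apply: Ehat_fin => //; apply: le_lt_trans Hsq; exact: leeDr.
set a := ca P X; set b := cb P Y; set c := cc P X Y.
have G : forall m1 m2, Ehat P (fun w => ((X w - m1) * (Y w - m2))%R) =
    (\big[Order.max/-oo%E]_(i < K) (c i + (a i - m1) * (b i - m2))%:E)%E.
  move=> m1 m2; rewrite /Ehat; apply: eq_bigr => i _; exact: Emix.
have [kA HkA] := argmaxE a K0.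
have [lA HlA] := argminE a K0.
have [kB HkB] := argmaxE b K0.
have [lB HlB] := argminE b K0.
have MX : forall r, Mset P X r <-> a lA <= r <= a kA.
  move=> r; rewrite /Mset /=.
  have -> : Ehat P X = (a kA)%:E.
    rewrite /Ehat (eq_bigr (fun i => (a i)%:E)); first exact: bigmaxE.
    by move=> i _; exact: EfinX.
  have -> : Ehat P (fun w => (- X w)%R) = (- a lA)%:E.
    rewrite /Ehat (eq_bigr (fun i => (- a i)%:E)); first by apply: bigmaxE => i; rewrite lerN2.
    by move=> i _; exact: Eneg.
  by rewrite EFinN oppeK !lee_fin.
have MY : forall r, Mset P Y r <-> b lB <= r <= b kB.
  move=> r; rewrite /Mset /=.
  have -> : Ehat P Y = (b kB)%:E.
    rewrite /Ehat (eq_bigr (fun i => (b i)%:E)); first exact: bigmaxE.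
    by move=> i _; exact: EfinX.
  have -> : Ehat P (fun w => (- Y w)%R) = (- b lB)%:E.
    rewrite /Ehat (eq_bigr (fun i => (- b i)%:E)); first by apply: bigmaxE => i; rewrite lerN2.
    by move=> i _; exact: Eneg.
  by rewrite EFinN oppeK !lee_fin.
have Ecov : forall i, covariance (P i) X Y = (c i)%:E.
  move=> i; rewrite /c /cc fineK //.
  have Pfin : P i setT \is a fin_num := fin_num_measure (P i) _ measurableT.
  apply: covariance_fin_num; try exact: Lfun_subset12.
  exact: Lfun2_mul_Lfun1.
have Eq : forall i j, qfun P X Y i j (mutilde P X Y i j) = gq a b c i j (gmu a b c i j) by [].
rewrite (eq_bigr (fun i => (c i)%:E)); last by move=> i _; exact: Ecov.
set Vt := Order.max _ _.
have Vfin : (Vt \is a fin_num)%E.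
  apply: fin_real; apply/andP; split.
    apply: (@lt_le_trans _ _ (c i0)%:E); first exact: ltNyr.
    rewrite le_max; apply/orP; left.
    exact: (le_bigmax (-oo%E) (fun i => (c i)%:E) i0).
  rewrite gt_max; apply/andP; split.
    by apply: bigmax_lt => // i _; exact: ltry.
  apply: bigmax_lt => // i _; apply: bigmax_lt => // j _; exact: ltry.
set V := fine Vt.
have VE : Vt = V%:E by rewrite /V fineK.
have Hc : forall i, c i <= V.
  move=> i; rewrite -lee_fin -VE; rewrite le_max; apply/orP; left.
  exact: (le_bigmax (-oo%E) (fun i => (c i)%:E) i).
have Hq : forall i j : 'I_K, (i <= j)%N -> gq a b c i j (gmu a b c i j) <= V.
  move=> i j ij; rewrite -lee_fin -VE; rewrite le_max; apply/orP; right.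
  apply: le_trans (le_bigmax (-oo%E) _ i).
  exact: (le_bigmax_cond (-oo%E) (fun j => (gq a b c i j (gmu a b c i j))%:E) ij).
apply/eqP; rewrite eq_le; apply/andP; split.
  apply: ge_ereal_sup => y [m2 Hm2 <-].
  have [m1 [Hm1 HL]] := core_upper a b c V m2 (a lA) (a kA) Hc Hq
    (fun i => introT andP (conj (HlA i) (HkA i))) (le_trans (HlA kA) (lexx _)).
  apply: ge_ereal_inf; exists (Ehat P (fun w => ((X w - m1) * (Y w - m2))%R)).
    by exists m1 => //; apply/MX.
  rewrite G VE; apply: bigmax_le => [|i _]; [exact: leNye | rewrite lee_fin; exact: HL].
rewrite ge_max; apply/andP; split.
  apply: bigmax_le => [|i _]; first exact: leNye.
  apply: le_ereal_sup_tmp.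
  exists (ereal_inf [set Ehat P (fun w => ((X w - m1) * (Y w - b i))%R) | m1 in Mset P X]).
    by exists (b i) => //; apply/MY; rewrite HlB HkB.
  apply: le_ereal_inf_tmp => z [m1 _ <-]; rewrite G.
  apply: le_trans (le_bigmax (-oo%E) _ i); rewrite lee_fin subrr mulr0 addr0 //.
apply: bigmax_le => [|i _]; first exact: leNye.
apply: bigmax_le => [|j ij]; first exact: leNye.
set mu := gmu a b c i j.
apply: le_ereal_sup_tmp.
exists (ereal_inf [set Ehat P (fun w => ((X w - m1) * (Y w - mu))%R) | m1 in Mset P X]).
  exists mu => //; apply/MY.
  have /andP[h1 h2] := between_lohi _ _ _ (gmu_between a b c i j).
  apply/andP; split.
    by apply: le_trans h1; rewrite le_min !HlB.
  by apply: le_trans h2 _; rewrite ge_max !HkB.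
apply: le_ereal_inf_tmp => z [m1 _ <-]; rewrite G.
have [k /andP[_ Hk]] := lower_q a b c i j m1.
apply: le_trans (le_bigmax (-oo%E) _ k); rewrite lee_fin; exact: Hk.
Qed.
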